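(* Let $r\in\{-1,+1\}$ and $\Phi(x,y)=r\phi(x-y)$. Let $f:\mathbb R^n\to\overline{\mathbb R}$ be left $\Phi$-convex, and let $\bar x\in\mathbb R^n$ be a point where $f$ is finite and strictly continuous. Then $\partial_\Phi f(\bar x)$ is nonempty and compact.
   Context: Standing assumption: $\phi:\mathbb R^n\to\mathbb R$ is convex, finite-valued, differentiable and strictly convex (Legendre with full domain), super-coercive. Left $\Phi$-convex: $f=\sup_{i\in I}\Phi(\cdot,y_i)-\beta_i$ for some family $(y_i,\beta_i)\in\mathbb R^n\times\overline{\mathbb R}$. For $\bar x\in\operatorname{dom}f$, $\partial_\Phi f(\bar x)=\{\bar y: f(x)\ge f(\bar x)+\Phi(x,\bar y)-\Phi(\bar x,\bar y)\ \forall x\}$. $f$ is strictly continuous at $\bar x$ (with $f(\bar x)$ finite) if $\limsup_{x,x'\to\bar x,\,x\neq x'}|f(x)-f(x')|/\|x-x'\|<\infty$. *)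

(* Defs.v *)
From HB Require Import structures.
From mathcomp Require Import all_boot all_order all_algebra.
From mathcomp Require Import all_classical all_reals all_analysis.
Set Implicit Arguments. Unset Strict Implicit. Unset Printing Implicit Defensive.
Import Order.TTheory GRing.Theory Num.Theory.
Import numFieldNormedType.Exports.
Local Open Scope classical_set_scope.
Local Open Scope ring_scope.

Definition convex_fun {R : realType} {n : nat} (phi : 'rV[R]_n -> R) : Prop :=
  forall (x y : 'rV[R]_n) (t : R), 0 <= t -> t <= 1 ->
    phi (t *: x + (1 - t) *: y) <= t * phi x + (1 - t) * phi y.

Definition strictly_convex_fun {R : realType} {n : nat} (phi : 'rV[R]_n -> R) : Prop :=
  forall (x y : 'rV[R]_n) (t : R), x != y -> 0 < t -> t < 1 ->
    phi (t *: x + (1 - t) *: y) < t * phi x + (1 - t) * phi y.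

Definition super_coercive {R : realType} {n : nat} (phi : 'rV[R]_n -> R) : Prop :=
  forall M : R, exists r0 : R, forall x : 'rV[R]_n, r0 <= `|x| -> M * `|x| <= phi x.

(* Standing assumption on phi: Legendre with full domain, super-coercive *)
Definition standing_phi {R : realType} {n : nat} (phi : 'rV[R]_n -> R) : Prop :=
  [/\ convex_fun phi, strictly_convex_fun phi,
      (forall x, differentiable phi x) & super_coercive phi].

Definition Phi_of {R : realType} {n : nat} (r : R) (phi : 'rV[R]_n -> R)
  (x y : 'rV[R]_n) : R := r * phi (x - y).

Definition left_Phi_convex {R : realType} {n : nat}
  (Phi : 'rV[R]_n -> 'rV[R]_n -> R) (f : 'rV[R]_n -> \bar R) : Prop :=
  exists (I : Type) (y : I -> 'rV[R]_n) (beta : I -> \bar R),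
    forall x, f x = ereal_sup [set ((Phi x (y i))%:E - beta i)%E | i in [set: I]].

Definition Phi_subdiff {R : realType} {n : nat}
  (Phi : 'rV[R]_n -> 'rV[R]_n -> R) (f : 'rV[R]_n -> \bar R) (xbar : 'rV[R]_n)
  : set 'rV[R]_n :=
  [set ybar | forall x, (f xbar + (Phi x ybar - Phi xbar ybar)%:E <= f x)%E].

(* strict continuity at xbar (f xbar finite):
   limsup_{x,x' -> xbar, x <> x'} |f x - f x'| / |x - x'| < oo, written out *)
Definition strictly_continuous_at {R : realType} {n : nat}
  (f : 'rV[R]_n -> \bar R) (xbar : 'rV[R]_n) : Prop :=
  f xbar \is a fin_num /\
  exists (K : R) (d : R), 0 < d /\
    forall x x' : 'rV[R]_n, ball xbar d x -> ball xbar d x' -> x != x' ->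
      (`|f x - f x'| <= K%:E * (`|x - x'|)%:E)%E.

(* Main.v *)
Require Import Defs.
From HB Require Import structures.
From mathcomp Require Import all_boot all_order all_algebra.
From mathcomp Require Import all_classical all_reals all_analysis.
From mathcomp Require Import ring lra.
Import Order.TTheory GRing.Theory Num.Theory.
Import numFieldNormedType.Exports.
Local Open Scope classical_set_scope.
Local Open Scope ring_scope.
Lemma L1 {R : realType} {w u v : R} {be a : \bar R} :
  (w%:E < u%:E - be)%E -> (v%:E - be <= a)%E ->
  a = +oo%E \/ exists b, be = b%:E /\ w < u - b /\ ((v - b)%:E <= a)%E.
Proof.
case: be => [b||] h1 h2.
  right; exists b; split; first by [].
  by split; [rewrite -lte_fin; exact: h1 | exact: h2].
  by move: h1; rewrite /= addeNy ltNge leNye.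
by left; move: h2; rewrite /= addey // leye_eq => /eqP.
Qed.
Lemma coerc (R : realType) n (phi : 'rV[R]_n -> R) (r δ C : R) :
 convex_fun phi -> super_coercive phi -> (r = 1 \/ r = -1) -> 0 < δ ->
 exists Rb, 0 < Rb /\ forall z, (forall v, `|v| = δ -> r * (phi (z + v) - phi z) <= C) -> `|z| <= Rb.
Proof.
move=> cvx sc hr d0.
set M := (C + δ * `|phi 0| + 1) / δ.
have [r0 hr0] := sc M.
exists (Num.max 1 (Num.max δ r0)); split; first by rewrite lt_max ltr01.
move=> z Hz; rewrite leNgt; apply/negP => hs.
set s := `|z| in hs.
have s1 : 1 < s by move: hs; rewrite !gt_max => /and3P[].
have sd : δ < s by move: hs; rewrite !gt_max => /and3P[].
have sr0 : r0 < s by move: hs; rewrite !gt_max => /and3P[].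
have s0 : 0 < s by lra.
have hM := hr0 z (ltW sr0).
have key : δ * phi z <= s * C + δ * phi 0.
  case: hr => hr; rewrite hr in Hz.
    set v := (δ / s) *: z.
    have nv : `|v| = δ.
      rewrite /v normrZ ger0_norm; last by apply: divr_ge0; lra.
      rewrite -/s; field; lra.
    have h1 := Hz v nv; rewrite mul1r in h1.
    set t := s / (s + δ).
    have ht0 : 0 <= t by apply: divr_ge0; lra.
    have ht1 : t <= 1 by rewrite ler_pdivrMr; lra.
    have hc := cvx (z + v) 0 t ht0 ht1.
    have ez : t *: (z + v) + (1 - t) *: 0 = z.
      rewrite scaler0 addr0 /v -{1}(scale1r z) -scalerDl scalerA.
      have -> : t * (1 + δ / s) = 1 by rewrite /t; field; lra.
      by rewrite scale1r.
    rewrite ez in hc.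
    have h2 : (s + δ) * phi z <= (s + δ) * (t * phi (z + v) + (1 - t) * phi 0).
      by rewrite ler_wpM2l //; lra.
    have e2 : (s + δ) * (t * phi (z + v) + (1 - t) * phi 0) = s * phi (z + v) + δ * phi 0.
      by rewrite /t; field; lra.
    have h3 : s * (phi (z + v) - phi z) <= s * C by rewrite ler_wpM2l //; lra.
    lra.
  set v := - ((δ / s) *: z).
  have nv : `|v| = δ.
    rewrite /v normrN normrZ ger0_norm; last by apply: divr_ge0; lra.
    rewrite -/s; field; lra.
  have h1 := Hz v nv.
  set t := (s - δ) / s.
  have ht0 : 0 <= t by apply: divr_ge0; lra.
  have ht1 : t <= 1 by rewrite ler_pdivrMr; lra.
  have hc := cvx z 0 t ht0 ht1.
  have ez : t *: z + (1 - t) *: 0 = z + v.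
    rewrite scaler0 addr0 /v -{2}(scale1r z) -scaleNr -scalerDl.
    by congr (_ *: _); rewrite /t; field; lra.
  rewrite ez in hc.
  have h2 : s * phi (z + v) <= s * (t * phi z + (1 - t) * phi 0).
    by rewrite ler_wpM2l //; lra.
  have e2 : s * (t * phi z + (1 - t) * phi 0) = (s - δ) * phi z + δ * phi 0.
    by rewrite /t; field; lra.
  have h3 : s * (-1 * (phi (z + v) - phi z)) <= s * C by rewrite ler_wpM2l //; lra.
  lra.
have h4 : δ * (M * s) <= δ * phi z by rewrite ler_wpM2l //; lra.
have e4 : δ * (M * s) = C * s + δ * `|phi 0| * s + s by rewrite /M; field; lra.
have h5 : δ * phi 0 <= δ * `|phi 0| by rewrite ler_wpM2l ?ler_norm //; lra.
have h6 : 0 <= δ * `|phi 0| * (s - 1).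
  by apply: mulr_ge0; [apply: mulr_ge0; [lra | exact: normr_ge0] | lra].
lra.
Qed.

Theorem mainTheorem9 (R : realType) (n : nat) (phi : 'rV[R]_n -> R) (r : R)
  (f : 'rV[R]_n -> \bar R) (xbar : 'rV[R]_n) :
  standing_phi phi ->
  (r = 1 \/ r = -1) ->
  left_Phi_convex (Phi_of r phi) f ->
  f xbar \is a fin_num ->
  strictly_continuous_at f xbar ->
  Phi_subdiff (Phi_of r phi) f xbar !=set0 /\
  compact (Phi_subdiff (Phi_of r phi) f xbar).
Proof.
move=> [cvx scvx dif sc] hr [I [y [beta Hf]]] fin [_ [K [d [d0 Hsc]]]].
have phic : continuous phi := fun x => differentiable_continuous (dif x).
set c := fine (f xbar).
have fc : f xbar = c%:E by rewrite /c fineK.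
have ub : forall i x, ((Phi_of r phi x (y i))%:E - beta i <= f x)%E.
  by move=> i x; rewrite Hf; apply: ereal_sup_ubound; exists i.
pose S (e : R) := [set y' | exists2 i,
   ((c - e)%:E < (Phi_of r phi xbar (y i))%:E - beta i)%E & y i = y'].
have Sne : forall e, 0 < e -> S e !=set0.
  move=> e e0; have : ((c - e)%:E < f xbar)%E by rewrite fc lte_fin; lra.
  by rewrite Hf => /ereal_sup_gt [_ [i _ <-] hi]; exists (y i), i.
pose δ := d / 2.
have δ0 : 0 < δ by rewrite /δ; lra.
have [Rb [Rb0 HRb]] := @coerc R n phi r δ (K * δ + 1) cvx sc hr δ0.
have fbound : forall v, `|v| = δ -> exists a, f (xbar + v) = a%:E /\ a <= c + K * δ.
  move=> v nv.
  have b1 : ball xbar d (xbar + v).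
    by rewrite -ball_normE /ball_ /= opprD addrA subrr add0r normrN nv /δ; lra.
  have neq : xbar + v != xbar.
    apply/negP => /eqP e; have v0 : v = 0 by rewrite -(addKr xbar v) e addNr.
    by move: nv; rewrite v0 normr0 => h; lra.
  have := Hsc _ _ b1 (ballxx _ d0) neq.
  rewrite fc (addrAC xbar v) subrr add0r nv.
  case: (f (xbar + v)) => [a||] /=.
      by rewrite lee_fin => h; exists a; split => //; move: h; rewrite ler_norml; lra.
    by rewrite leNgt ltry.
  by rewrite leNgt ltry.
pose Bd := closed_ball xbar Rb.
have Bmem : forall yy, `|xbar - yy| <= Rb -> Bd yy.
  by move=> yy h; rewrite /Bd closed_ballE.
have slope : forall yy, (forall v, `|v| = δ ->
    r * (phi (xbar + v - yy) - phi (xbar - yy)) <= K * δ + 1) -> Bd yy.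
  move=> yy h; apply: Bmem; apply: HRb => v nv.
  by rewrite addrAC; apply: h.
have S1sub : S 1 `<=` Bd.
  move=> _ [i hi <-]; apply: slope => v nv.
  have [a [fa ha]] := fbound v nv.
  have := ub i (xbar + v); rewrite fa => hu.
  case: (L1 hi hu) => [//|[b [_ [h1 h2]]]].
  move: h2; rewrite lee_fin /Phi_of => h2; move: h1; rewrite /Phi_of => h1.
  lra.
have subBd : Phi_subdiff (Phi_of r phi) f xbar `<=` Bd.
  move=> yy hyy; apply: slope => v nv.
  have [a [fa ha]] := fbound v nv.
  have := hyy (xbar + v); rewrite fc fa -EFinD lee_fin /Phi_of => h.
  lra.
have cBd : compact Bd.
  apply: bounded_closed_compact; last exact: closed_ball_closed.
  rewrite /bounded_near /=.
  apply: filterS (nbhs_pinfty_ge (num_real (`|xbar| + Rb))) => M hM z /= Bz.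
  rewrite /Bd closed_ballE // /closed_ball_ /= in Bz.
  have := ler_normB xbar (xbar - z); rewrite opprB addrCA subrr addr0 => hz.
  apply: (le_trans hz); apply: (@le_trans _ _ (`|xbar| + Rb)); first by rewrite lerD2l.
  exact: hM.
pose g x y' := Phi_of r phi x y' - Phi_of r phi xbar y'.
have gcont : forall x p e, 0 < e -> \forall y' \near p, `|g x p - g x y'| < e.
  move=> x p e e0.
  have hc : forall x0, (fun y' => phi (x0 - y')) @ p --> phi (x0 - p).
    move=> x0.
    have h1 : (fun y' => x0 - y') @ p --> x0 - p.
      exact: (@cvgB _ _ _ (nbhs p) (nbhs_filter p) _ _ _ _ (cvg_cst x0) cvg_id).
    exact: (cvg_comp _ _ h1 (phic _)).
  have : (g x) @ p --> g x p.
    exact: (@cvgB _ _ _ (nbhs p) (nbhs_filter p) _ _ _ _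
      (cvgM (cvg_cst r) (hc x)) (cvgM (cvg_cst r) (hc xbar))).
  by move/cvgrPdist_lt; apply.
have close : forall x p, (forall e, 0 < e -> exists y',
      ((c + g x y' - e)%:E <= f x)%E /\ `|g x p - g x y'| < e) ->
    (f xbar + (Phi_of r phi x p - Phi_of r phi xbar p)%:E <= f x)%E.
  move=> x p H; rewrite fc -EFinD; apply/lee_subgt0Pr => e e0.
  have [y' [h1 h2]] := H (e / 2) ltac:(lra).
  apply: le_trans h1; rewrite -EFinB lee_fin.
  move: h2; rewrite ltr_norml /g => h2; lra.
pose F := filter_from [set e : R | 0 < e] S.
have FF : ProperFilter F.
  apply: filter_from_proper; last exact: Sne.
  apply: filter_from_filter; first by exists 1; rewrite /= ltr01.
  move=> e1 e2 h1 h2; exists (Num.min e1 e2); first by rewrite /= lt_min h1 h2.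
  move=> _ [i hi <-]; split; exists i => //; apply: le_lt_trans hi;
    rewrite lee_fin lerD2l lerN2 ge_min lexx ?orbT //.
have FB : F Bd by exists 1; [rewrite /= ltr01 | exact: S1sub].
have [p [Bp cl]] := cBd F FF FB.
split.
  exists p => x; apply: close => e e0.
  have [_ [[i hi <-] hB]] := cl (S (e / 2)) _ (ltac:(exists (e / 2) => //=; lra)) (gcont x p e e0).
  exists (y i); split => //.
  case: (L1 hi (ub i x)) => [->|[b [_ [h1 h2]]]]; first exact: leey.
  apply: le_trans h2; rewrite lee_fin /g; lra.
apply: subclosed_compact cBd subBd => q clq x; apply: close => e e0.
have [y' [hy hB]] := clq _ (gcont x q e e0).
exists y'; split => //; apply: le_trans (hy x).
rewrite fc -EFinD lee_fin /g; lra.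
Qed.
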